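(* Let $\mathcal{M}=\langle M,\circ,e\rangle$ be an effective mge monoid. Then it is decidable, given a real-time monoidal finite-state transducer $\mathcal{T}=\langle\Sigma^*\times\mathcal{M},Q,I,F,\Delta\rangle$, whether $\mathcal{T}$ is functional.
   Context: A tuple $\langle m_1,\dots,m_n\rangle$ is equalizable if some $\langle x_1,\dots,x_n\rangle$ satisfies $m_1x_1=\dots=m_nx_n$; such a tuple is an equalizer, and it is a most general equalizer (mge) if every equalizer has the form $\langle x_1x,\dots,x_nx\rangle$, $x\in M$. An mge monoid has right cancellation ($ac=bc\Rightarrow a=b$) and an mge for every equalizable pair. It is effective if elements are represented as a recursive subset of $\mathbb{N}$ with computable operation, equality is decidable, equalizability of pairs is decidable, a computable $\eta:M^2\to M^2$ returns an mge for each equalizable pair, and inverses of invertible elements (those $m$ with $mn=e$ for some $n$) are computable. A real-time transducer has finite $\Delta\subseteq Q\times(\Sigma\times M)\times Q$; its language $L(\mathcal{T})$ is the set of labels $\langle u,m\rangle\in\Sigma^*\times M$ of paths (including empty paths, labelled $\langle\varepsilon,e\rangle$) from a state in $I$ to a state in $F$; $\mathcal{T}$ is functional if $L(\mathcal{T})$ is the graph of a partial function. *)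

(* Defs.v *)
(* Computability is modelled explicitly by Kleene-style
   partial recursive programs on nat (with Cantor pairing), since with the
   whitelisted classical axioms a bare Rocq function "T -> bool" would make
   any decidability claim trivial. *)
From Stdlib Require Import Arith List.
Import ListNotations.

Definition cpair (x y : nat) : nat := (x + y) * S (x + y) / 2 + y.

Inductive prog : Type :=
| PZero
| PSucc
| PFst
| PSnd
| PPair (f g : prog)
| PComp (f g : prog)
| PRec  (f g : prog)
| PMu   (f : prog).

Inductive eval : prog -> nat -> nat -> Prop :=
| eZero n : eval PZero n 0
| eSucc n : eval PSucc n (S n)
| eFst x y : eval PFst (cpair x y) x
| eSnd x y : eval PSnd (cpair x y) y
| ePair f g n a b :
    eval f n a -> eval g n b -> eval (PPair f g) n (cpair a b)
| eComp f g n a b :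
    eval g n a -> eval f a b -> eval (PComp f g) n b
| eRec0 f g x a :
    eval f x a -> eval (PRec f g) (cpair x 0) a
| eRecS f g x k a b :
    eval (PRec f g) (cpair x k) a ->
    eval g (cpair x (cpair k a)) b ->
    eval (PRec f g) (cpair x (S k)) b
| eMu f x k :
    eval f (cpair x k) 0 ->
    (forall j, j < k -> exists v, v <> 0 /\ eval f (cpair x j) v) ->
    eval (PMu f) x k.

Definition decidable_pred (P : nat -> Prop) : Prop :=
  exists p : prog, forall n,
    (P n -> eval p n 1) /\ (~ P n -> eval p n 0).

Section Monoid.
Variables (M : nat -> Prop) (op : nat -> nat -> nat) (e : nat).

Definition is_monoid : Prop :=
  M e /\
  (forall a b, M a -> M b -> M (op a b)) /\
  (forall a b c, M a -> M b -> M c -> op (op a b) c = op a (op b c)) /\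
  (forall a, M a -> op e a = a /\ op a e = a).

Definition right_cancellative : Prop :=
  forall a b c, M a -> M b -> M c -> op a c = op b c -> a = b.

Definition equalizer (m1 m2 x1 x2 : nat) : Prop :=
  M x1 /\ M x2 /\ op m1 x1 = op m2 x2.

Definition equalizable (m1 m2 : nat) : Prop :=
  exists x1 x2, equalizer m1 m2 x1 x2.

Definition mge (m1 m2 x1 x2 : nat) : Prop :=
  equalizer m1 m2 x1 x2 /\
  forall y1 y2, equalizer m1 m2 y1 y2 ->
    exists x, M x /\ y1 = op x1 x /\ y2 = op x2 x.

Definition mge_monoid : Prop :=
  is_monoid /\ right_cancellative /\
  forall m1 m2, M m1 -> M m2 -> equalizable m1 m2 ->
    exists x1 x2, mge m1 m2 x1 x2.

Definition invertible (m : nat) : Prop :=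
  exists n, M n /\ op m n = e.

(* Effective mge monoid: elements form a recursive subset of nat (equality
   of elements is then equality of naturals, hence decidable), the operation
   is computable, equalizability of pairs is decidable, a computable eta
   returns an mge for each equalizable pair, inverses are computable. *)
Definition effective_mge_monoid : Prop :=
  mge_monoid /\
  decidable_pred M /\
  (exists p : prog, forall a b, M a -> M b -> eval p (cpair a b) (op a b)) /\
  (exists p : prog, forall a b, M a -> M b ->
      (equalizable a b -> eval p (cpair a b) 1) /\
      (~ equalizable a b -> eval p (cpair a b) 0)) /\
  (exists eta : prog, forall a b, M a -> M b -> equalizable a b ->
      exists x1 x2, eval eta (cpair a b) (cpair x1 x2) /\ mge a b x1 x2) /\
  (exists inv : prog, forall m, M m -> invertible m ->
      exists n, eval inv m n /\ M n /\ op m n = e).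

End Monoid.

(* States and letters are natural numbers; Q and Sigma are the (finitely
   many) states / letters mentioned.  A transition (p, a, m, q) reads the
   letter a, outputs the monoid element m, and goes from p to q. *)
Record transducer : Type := Transducer {
  t_init  : list nat;
  t_final : list nat;
  t_delta : list (nat * nat * nat * nat)
}.

Definition wf_transducer (M : nat -> Prop) (T : transducer) : Prop :=
  forall p a m q, In (p, a, m, q) (t_delta T) -> M m.

Inductive path (op : nat -> nat -> nat) (e : nat) (T : transducer)
  : nat -> list nat -> nat -> nat -> Prop :=
| path_nil p : path op e T p [] e p
| path_cons p a m1 r u m2 q :
    In (p, a, m1, r) (t_delta T) ->
    path op e T r u m2 q ->
    path op e T p (a :: u) (op m1 m2) q.

Definition in_language op e (T : transducer) (u : list nat) (m : nat) : Prop :=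
  exists p q, In p (t_init T) /\ In q (t_final T) /\ path op e T p u m q.

Definition functional op e (T : transducer) : Prop :=
  forall u m m', in_language op e T u m -> in_language op e T u m' -> m = m'.

Fixpoint code_list (l : list nat) : nat :=
  match l with
  | [] => 0
  | x :: l' => S (cpair x (code_list l'))
  end.

Definition code_trans (t : nat * nat * nat * nat) : nat :=
  match t with (p, a, m, q) => cpair p (cpair a (cpair m q)) end.

Definition code_transducer (T : transducer) : nat :=
  cpair (code_list (t_init T))
        (cpair (code_list (t_final T)) (code_list (map code_trans (t_delta T)))).

(* Main.v *)
Require Import Defs.
From Stdlib Require Import Arith List Lia Classical ListDec ClassicalEpsilon.
Import ListNotations.

Fixpoint unpair (n : nat) : nat * nat :=
  match n with
  | 0 => (0, 0)
  | S n' => match unpair n' with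
            | (0, y) => (S y, 0)
            | (S x, y) => (x, S y)
            end
  end.

Lemma cpair_Sr x y : cpair x (S y) = S (cpair (S x) y).
Proof.
  unfold cpair. replace (x + S y) with (S x + y) by lia.
  remember ((S x + y) * S (S x + y) / 2) as z. lia.
Qed.

Lemma cpair_S0 y : cpair (S y) 0 = S (cpair 0 y).
Proof.
  unfold cpair. rewrite !Nat.add_0_r, Nat.add_0_l.
  replace (S y * S (S y)) with (y * S y + (S y) * 2) by lia.
  rewrite Nat.div_add by lia. lia.
Qed.

Lemma cpair_unpair n : cpair (fst (unpair n)) (snd (unpair n)) = n.
Proof.
  induction n as [|n IH]; [reflexivity|].
  simpl. destruct (unpair n) as [[|x] y]; simpl in *.
  - rewrite cpair_S0. congruence.
  - rewrite cpair_Sr. congruence.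
Qed.

Lemma unpair_cover s y : y <= s -> exists n, unpair n = (s - y, y).
Proof.
  revert y. induction s as [|s IHs]; intros y Hy.
  - exists 0. replace y with 0 by lia. reflexivity.
  - induction y as [|y IHy].
    + destruct (IHs s (le_n s)) as [n Hn]. exists (S n). simpl. rewrite Hn.
      rewrite Nat.sub_diag. reflexivity.
    + destruct IHy as [n Hn]; [lia|]. exists (S n). simpl. rewrite Hn.
      replace (S s - y) with (S (s - y)) by lia. reflexivity.
Qed.

Lemma unpair_cpair x y : unpair (cpair x y) = (x, y).
Proof.
  destruct (unpair_cover (x + y) y) as [n Hn]; [lia|].
  replace (x + y - y) with x in Hn by lia.
  assert (E : cpair x y = n) by (rewrite <- (cpair_unpair n), Hn; reflexivity). rewrite E. exact Hn.
Qed.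

Lemma cpair_ge_r x y : y <= cpair x y.
Proof. unfold cpair. lia. Qed.
Global Opaque cpair.
Definition fst' n := fst (unpair n).
Definition snd' n := snd (unpair n).
Lemma fst'_cpair x y : fst' (cpair x y) = x.
Proof. unfold fst'. rewrite unpair_cpair. reflexivity. Qed.
Lemma snd'_cpair x y : snd' (cpair x y) = y.
Proof. unfold snd'. rewrite unpair_cpair. reflexivity. Qed.
Lemma cpair_eta n : cpair (fst' n) (snd' n) = n.
Proof. apply cpair_unpair. Qed.
Lemma cpair_inj a b c d : cpair a b = cpair c d -> a = c /\ b = d.
Proof. intro H. pose proof (f_equal unpair H) as H'. rewrite !unpair_cpair in H'. injection H'; auto. Qed.

Definition computes (p : prog) (f : nat -> nat) := forall n, eval p n (f n).

Record cfun := { cp : prog; cf : nat -> nat; cok : computes cp cf }.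

Lemma ev_fst n : eval PFst n (fst' n).
Proof. rewrite <- (cpair_eta n) at 1. constructor. Qed.
Lemma ev_snd n : eval PSnd n (snd' n).
Proof. rewrite <- (cpair_eta n) at 1. constructor. Qed.

Definition pid := PPair PFst PSnd.
Lemma ev_id n : eval pid n n.
Proof. rewrite <- (cpair_eta n) at 2. constructor; [apply ev_fst|apply ev_snd]. Qed.

Fixpoint pconst k := match k with 0 => PZero | S k => PComp PSucc (pconst k) end.
Lemma ev_const k n : eval (pconst k) n k.
Proof. induction k; simpl. constructor. econstructor; [exact IHk|constructor]. Qed.

Inductive ex :=
| X | Kc (k : nat) | Pr (a b : ex) | F1 (a : ex) | S1 (a : ex) | Ap (c : cfun) (a : ex) | Sc (a : ex).

Fixpoint den (e : ex) (n : nat) : nat :=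
  match e with
  | X => n
  | Kc k => k
  | Pr a b => cpair (den a n) (den b n)
  | F1 a => fst' (den a n)
  | S1 a => snd' (den a n)
  | Ap c a => cf c (den a n)
  | Sc a => S (den a n)
  end.

Fixpoint cmp (e : ex) : prog :=
  match e with
  | X => pid
  | Kc k => pconst k
  | Pr a b => PPair (cmp a) (cmp b)
  | F1 a => PComp PFst (cmp a)
  | S1 a => PComp PSnd (cmp a)
  | Ap c a => PComp (cp c) (cmp a)
  | Sc a => PComp PSucc (cmp a)
  end.

Lemma cmp_ok e : computes (cmp e) (den e).
Proof.
  induction e; intro n; simpl.
  - apply ev_id.
  - apply ev_const.
  - constructor; auto.
  - econstructor; [apply IHe|apply ev_fst].
  - econstructor; [apply IHe|apply ev_snd].
  - econstructor; [apply IHe|apply cok].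
  - econstructor; [apply IHe|constructor].
Qed.

Definition mk (e : ex) : cfun := {| cp := cmp e; cf := den e; cok := cmp_ok e |}.

Fixpoint recf (F G : nat -> nat) (x k : nat) : nat :=
  match k with 0 => F x | S k' => G (cpair x (cpair k' (recf F G x k'))) end.

Lemma rec_ok (f g : cfun) : computes (PRec (cp f) (cp g)) (fun n => recf (cf f) (cf g) (fst' n) (snd' n)).
Proof.
  intro n. rewrite <- (cpair_eta n) at 1. generalize (snd' n) as k. generalize (fst' n) as x.
  intros x k. induction k; simpl.
  - constructor. apply cok.
  - econstructor; [exact IHk|apply cok].
Qed.

Definition mkrec (f g : cfun) : cfun :=
  {| cp := PRec (cp f) (cp g); cf := fun n => recf (cf f) (cf g) (fst' n) (snd' n); cok := rec_ok f g |}.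

Lemma mkrec_eq f g x k : cf (mkrec f g) (cpair x k) = recf (cf f) (cf g) x k.
Proof. simpl. rewrite fst'_cpair, snd'_cpair. reflexivity. Qed.

Definition c_iter (g : cfun) : cfun := mkrec (mk X) (mk (Ap g (S1 (S1 X)))).
Lemma c_iter_eq g x k : cf (c_iter g) (cpair x k) = Nat.iter k (cf g) x.
Proof.
  unfold c_iter. rewrite mkrec_eq. induction k; simpl; auto.
  rewrite !snd'_cpair. f_equal. exact IHk.
Qed.


Global Opaque c_iter.
Ltac simp := simpl; repeat (rewrite ?fst'_cpair, ?snd'_cpair, ?mkrec_eq; simpl).

Definition c_pred : cfun := mk (Ap (mkrec (mk (Kc 0)) (mk (F1 (S1 X)))) (Pr (Kc 0) X)).
Lemma c_pred_eq n : cf c_pred n = pred n.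
Proof. unfold c_pred. simp. destruct n; simp; reflexivity. Qed.

Global Opaque c_pred.

Definition c_sub := c_iter c_pred.
Lemma c_sub_eq a b : cf c_sub (cpair a b) = a - b.
Proof.
  unfold c_sub. rewrite c_iter_eq. induction b; simpl. lia.
  rewrite IHb, c_pred_eq. lia.
Qed.
Global Opaque c_sub.

Definition c_add := c_iter (mk (Sc X)).
Lemma c_add_eq a b : cf c_add (cpair a b) = a + b.
Proof. unfold c_add. rewrite c_iter_eq. induction b; [simpl; lia|]. rewrite Nat.iter_succ, IHb. simpl. lia. Qed.
Global Opaque c_add.

Definition c_mul := mkrec (mk (Kc 0)) (mk (Ap c_add (Pr (F1 X) (S1 (S1 X))))).
Lemma c_mul_eq a b : cf c_mul (cpair a b) = a * b.
Proof.
  unfold c_mul. rewrite mkrec_eq. induction b; simpl. simpl; lia.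
  simpl. rewrite !snd'_cpair, fst'_cpair, c_add_eq. simpl in IHb. rewrite IHb. lia.
Qed.
Global Opaque c_mul.

Definition c_isz := mk (Ap (mkrec (mk (Kc 1)) (mk (Kc 0))) (Pr (Kc 0) X)).
Lemma c_isz_eq n : cf c_isz n = if n =? 0 then 1 else 0.
Proof. unfold c_isz. simp. destruct n; reflexivity. Qed.
Global Opaque c_isz.

Definition c_eqb := mk (Ap c_isz (Ap c_add (Pr (Ap c_sub (Pr (F1 X) (S1 X))) (Ap c_sub (Pr (S1 X) (F1 X)))))).
Lemma c_eqb_eq a b : cf c_eqb (cpair a b) = if a =? b then 1 else 0.
Proof.
  unfold c_eqb. simp. rewrite !c_sub_eq, c_add_eq, c_isz_eq.
  destruct (a =? b) eqn:E; [apply Nat.eqb_eq in E|apply Nat.eqb_neq in E];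
  destruct (a - b + (b - a) =? 0) eqn:E2; try reflexivity;
  [apply Nat.eqb_neq in E2|apply Nat.eqb_eq in E2]; lia.
Qed.
Global Opaque c_eqb.

Definition c_ite := mk (Ap (mkrec (mk (S1 X)) (mk (F1 (F1 X)))) (Pr (S1 X) (F1 X))).
Lemma c_ite_eq c x y : cf c_ite (cpair c (cpair x y)) = match c with 0 => y | _ => x end.
Proof. unfold c_ite. simp. destruct c; simp; reflexivity. Qed.
Global Opaque c_ite.

Definition c_it (step : cfun) := mk (Ap c_ite (Pr (F1 (S1 X))
   (Pr (Pr (F1 X) (Pr (S1 (Ap c_pred (F1 (S1 X))))
        (Ap step (Pr (F1 X) (Pr (F1 (Ap c_pred (F1 (S1 X)))) (S1 (S1 X)))))))
       X))).
Definition c_fold (step : cfun) := mk (S1 (S1 (Ap (c_iter (c_it step)) (Pr X (F1 (S1 X)))))).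


Lemma code_list_len l : length l <= code_list l.
Proof. induction l; simpl. lia. pose proof (cpair_ge_r a (code_list l)). lia. Qed.

Lemma it_nil step env acc : cf (c_it step) (cpair env (cpair 0 acc)) = cpair env (cpair 0 acc).
Proof. unfold c_it. simp. rewrite c_ite_eq. reflexivity. Qed.
Lemma it_cons step env x r acc : cf (c_it step) (cpair env (cpair (S (cpair x r)) acc)) =
  cpair env (cpair r (cf step (cpair env (cpair x acc)))).
Proof. unfold c_it. simp. rewrite c_ite_eq, !c_pred_eq. simpl. simp. reflexivity. Qed.

Lemma iter_it step env l acc k : length l <= k ->
  Nat.iter k (cf (c_it step)) (cpair env (cpair (code_list l) acc)) =
  cpair env (cpair 0 (fold_left (fun a x => cf step (cpair env (cpair x a))) l acc)).
Proof.
  revert acc k. induction l as [|x l IH]; intros acc k Hk.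
  - simpl. induction k; [reflexivity|]. rewrite Nat.iter_succ, IHk by (simpl; lia).
    apply it_nil.
  - destruct k as [|k]; [simpl in Hk; lia|]. rewrite Nat.iter_succ_r.
    simpl code_list. rewrite it_cons. apply IH. simpl in Hk. lia.
Qed.
Lemma c_fold_eq step env l acc :
  cf (c_fold step) (cpair env (cpair (code_list l) acc)) =
  fold_left (fun a x => cf step (cpair env (cpair x a))) l acc.
Proof.
  unfold c_fold. simp. rewrite c_iter_eq. rewrite iter_it by apply code_list_len. simp. reflexivity.
Qed.
Global Opaque c_fold.

Lemma fold_code {B} (F : nat -> nat -> nat) (G : list nat -> B -> list nat) (l : list B) (h : B -> nat) acc :
  (forall a x, F (code_list a) (h x) = code_list (G a x)) ->
  fold_left (fun a x => F a x) (map h l) (code_list acc) = code_list (fold_left G l acc).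
Proof. intro H. revert acc. induction l; intro acc; simpl; auto. rewrite H. apply IHl. Qed.

Lemma fold_code' (F : nat -> nat -> nat) (G : list nat -> nat -> list nat) (l : list nat) acc :
  (forall a x, F (code_list a) x = code_list (G a x)) ->
  fold_left (fun a x => F a x) l (code_list acc) = code_list (fold_left G l acc).
Proof. intro H. revert acc. induction l; intro acc; simpl; auto. rewrite H. apply IHl. Qed.

Section Alg.
Variable cop : cfun.
Variable e : nat.

Definition P_ c := fst' c.
Definition M1_ c := fst' (snd' c).
Definition Q_ c := fst' (snd' (snd' c)).
Definition M2_ c := snd' (snd' (snd' c)).
Definition src t := fst' t.
Definition lbl t := fst' (snd' t).
Definition out t := fst' (snd' (snd' t)).
Definition tgt t := snd' (snd' (snd' t)).
Definition cfg p m1 q m2 := cpair p (cpair m1 (cpair q m2)).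
Definition newc c t1 t2 := cfg (tgt t1) (cf cop (cpair (M1_ c) (out t1))) (tgt t2) (cf cop (cpair (M2_ c) (out t2))).
Definition condb c t1 t2 : bool := (src t1 =? P_ c) && (src t2 =? Q_ c) && (lbl t1 =? lbl t2).

Definition eP c := F1 c.
Definition eM1 c := F1 (S1 c).
Definition eQ c := F1 (S1 (S1 c)).
Definition eM2 c := S1 (S1 (S1 c)).
Definition emul a b := Ap c_mul (Pr a b).
Definition eeq a b := Ap c_eqb (Pr a b).
Definition eite c a b := Ap c_ite (Pr c (Pr a b)).

Definition c_inner := mk (
  let c := F1 (F1 X) in let t1 := S1 (F1 X) in let t2 := F1 (S1 X) in let acc := S1 (S1 X) in
  eite (emul (eeq (eP t1) (eP c)) (emul (eeq (eP t2) (eQ c)) (eeq (eM1 t1) (eM1 t2))))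
       (Sc (Pr (Pr (eM2 t1) (Pr (Ap cop (Pr (eM1 c) (eQ t1))) (Pr (eM2 t2) (Ap cop (Pr (eM2 c) (eQ t2))))))
               acc))
       acc).

Lemma b2 (b : bool) : (if b then 1 else 0) = Nat.b2n b.
Proof. destruct b; reflexivity. Qed.

Lemma inner_eq c t1 t2 acc :
  cf c_inner (cpair (cpair c t1) (cpair t2 acc)) =
  if condb c t1 t2 then S (cpair (newc c t1 t2) acc) else acc.
Proof.
  unfold c_inner, eite, emul, eeq, eP, eQ, eM1, eM2. simp.
  rewrite !c_eqb_eq, !c_mul_eq, c_ite_eq. unfold condb, newc, cfg, P_, Q_, M1_, M2_, src, lbl, out, tgt.
  destruct (fst' t1 =? fst' c), (fst' t2 =? fst' (snd' (snd' c))), (fst' (snd' t1) =? fst' (snd' t2)); reflexivity.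
Qed.
Global Opaque c_inner.

Definition innerL c t1 (D : list nat) acc :=
  fold_left (fun a t2 => if condb c t1 t2 then newc c t1 t2 :: a else a) D acc.

Definition c_outer := mk (Ap (c_fold c_inner) (Pr (Pr (F1 (F1 X)) (F1 (S1 X))) (Pr (S1 (F1 X)) (S1 (S1 X))))).

Lemma outer_eq c D t1 acc :
  cf c_outer (cpair (cpair c (code_list D)) (cpair t1 (code_list acc))) = code_list (innerL c t1 D acc).
Proof.
  unfold c_outer. simp. rewrite c_fold_eq. apply fold_code'.
  intros a x. rewrite inner_eq. destruct condb; reflexivity.
Qed.
Global Opaque c_outer.

Definition succL (D : list nat) c acc := fold_left (fun a t1 => innerL c t1 D a) D acc.

Definition c_stepRs := mk (Ap (c_fold c_outer) (Pr (Pr (F1 (S1 X)) (F1 X)) (Pr (F1 X) (S1 (S1 X))))).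

Lemma stepRs_eq D c acc :
  cf c_stepRs (cpair (code_list D) (cpair c (code_list acc))) = code_list (succL D c acc).
Proof.
  unfold c_stepRs. simp. rewrite c_fold_eq. apply fold_code'. intros. apply outer_eq.
Qed.
Global Opaque c_stepRs.

Definition stepL D R := fold_left (fun a c => succL D c a) R [].

Definition c_stepR := mk (Ap (c_fold c_stepRs) (Pr (F1 X) (Pr (S1 X) (Kc 0)))).
Lemma stepR_eq D R : cf c_stepR (cpair (code_list D) (code_list R)) = code_list (stepL D R).
Proof.
  unfold c_stepR. simp. rewrite c_fold_eq. apply (fold_code' _ _ _ []). intros. apply stepRs_eq.
Qed.
Global Opaque c_stepR.

Definition c_inner0 := mk (Sc (Pr (Pr (F1 X) (Pr (Kc e) (Pr (F1 (S1 X)) (Kc e)))) (S1 (S1 X)))).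
Definition c_outer0 := mk (Ap (c_fold c_inner0) (Pr (F1 (S1 X)) (Pr (F1 X) (S1 (S1 X))))).
Definition c_R0 := mk (Ap (c_fold c_outer0) (Pr X (Pr X (Kc 0)))).
Definition R0L (I : list nat) :=
  fold_left (fun a i => fold_left (fun a i' => cfg i e i' e :: a) I a) I [].
Lemma R0_eq I : cf c_R0 (code_list I) = code_list (R0L I).
Proof.
  unfold c_R0. simp. rewrite c_fold_eq. apply (fold_code' _ _ _ []). intros.
  unfold c_outer0. simp. rewrite c_fold_eq. apply fold_code'. intros.
  unfold c_inner0. simp. reflexivity.
Qed.
Global Opaque c_R0.

Definition c_memstep := mk (eite (S1 (S1 X)) (Kc 1) (eeq (F1 X) (F1 (S1 X)))).
Definition c_mem := mk (Ap (c_fold c_memstep) (Pr (F1 X) (Pr (S1 X) (Kc 0)))).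
Lemma mem_eq x l : cf c_mem (cpair x (code_list l)) = Nat.b2n (existsb (Nat.eqb x) l).
Proof.
  unfold c_mem. simp. rewrite c_fold_eq.
  assert (H : forall acc, acc <= 1 -> fold_left (fun a x0 => cf c_memstep (cpair x (cpair x0 a))) l acc
                  = Nat.b2n ((acc =? 1) || existsb (Nat.eqb x) l)).
  { induction l as [|y l IH]; intros acc Ha; simpl.
    - destruct acc as [|[|]]; simpl; auto; lia.
    - rewrite IH. unfold c_memstep, eite, eeq. simp. rewrite c_eqb_eq, c_ite_eq.
      destruct acc as [|[|]]; simpl; try lia; destruct (x =? y); reflexivity.
      unfold c_memstep, eite, eeq. simp. rewrite c_eqb_eq, c_ite_eq.
      destruct acc as [|[|]]; simpl; try lia; destruct (x =? y); simpl; lia. }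
  rewrite H by lia. reflexivity.
Qed.
Global Opaque c_mem.

Definition goodb F c : bool :=
  negb (existsb (Nat.eqb (P_ c)) F && existsb (Nat.eqb (Q_ c)) F) || (M1_ c =? M2_ c).

Definition c_chkstep := mk (
  let c := F1 (S1 X) in let F := F1 X in
  emul (S1 (S1 X)) (eite (emul (Ap c_mem (Pr (eP c) F)) (Ap c_mem (Pr (eQ c) F))) (eeq (eM1 c) (eM2 c)) (Kc 1))).
Lemma chkstep_eq F y acc : cf c_chkstep (cpair (code_list F) (cpair y (Nat.b2n acc))) = Nat.b2n (acc && goodb F y).
Proof.
  unfold c_chkstep, eite, eeq, emul, eP, eQ, eM1, eM2. simp. rewrite !mem_eq, c_eqb_eq, !c_mul_eq, c_ite_eq.
  unfold goodb, P_, Q_, M1_, M2_.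
  destruct acc, (existsb (Nat.eqb (fst' y)) F), (existsb (Nat.eqb (fst' (snd' (snd' y)))) F),
          (fst' (snd' y) =? snd' (snd' (snd' y))); reflexivity.
Qed.
Global Opaque c_chkstep.
Definition c_check := mk (Ap (c_fold c_chkstep) (Pr (F1 X) (Pr (S1 X) (Kc 1)))).
Lemma check_eq F R : cf c_check (cpair (code_list F) (code_list R)) = Nat.b2n (forallb (goodb F) R).
Proof.
  unfold c_check. simp. rewrite c_fold_eq.
  assert (H : forall acc, fold_left (fun a x0 => cf c_chkstep (cpair (code_list F) (cpair x0 a))) R (Nat.b2n acc)
                  = Nat.b2n (acc && forallb (goodb F) R)).
  { induction R as [|y R IH]; intros acc; simpl.
    - destruct acc; reflexivity.
    - rewrite chkstep_eq, IH. destruct acc; reflexivity. }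
  apply (H true).
Qed.
Global Opaque c_check.

End Alg.

Section Main.
Variable cop : cfun.
Variable e : nat.

Definition c_mainit := mk (Pr (F1 X) (Pr (F1 (S1 X)) (Pr (Ap (c_stepR cop) (Pr (F1 X) (F1 (S1 (S1 X)))))
   (emul (S1 (S1 (S1 X))) (Ap c_check (Pr (F1 (S1 X)) (F1 (S1 (S1 X))))))))).

Lemma mainit_eq D F R ok :
  cf c_mainit (cpair (code_list D) (cpair (code_list F) (cpair (code_list R) ok))) =
  cpair (code_list D) (cpair (code_list F) (cpair (code_list (stepL cop D R)) (ok * Nat.b2n (forallb (goodb F) R)))).
Proof. unfold c_mainit, emul. simp. rewrite stepR_eq, check_eq, c_mul_eq. reflexivity. Qed.
Global Opaque c_mainit.

Definition Rk D I k := Nat.iter k (stepL cop D) (R0L e I).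
Definition okb F D I k := forallb (fun j => forallb (goodb F) (Rk D I j)) (seq 0 k).

Lemma iter_main D F I k :
  Nat.iter k (cf c_mainit) (cpair (code_list D) (cpair (code_list F) (cpair (code_list (R0L e I)) 1))) =
  cpair (code_list D) (cpair (code_list F) (cpair (code_list (Rk D I k)) (Nat.b2n (okb F D I k)))).
Proof.
  induction k.
  - reflexivity.
  - rewrite Nat.iter_succ, IHk, mainit_eq. unfold okb. rewrite seq_S, forallb_app. simpl.
    unfold Rk at 1. simpl Nat.iter at 1. fold (Rk D I k).
    destruct (forallb _ (seq 0 k)), (forallb (goodb F) (Rk D I k)); reflexivity.
Qed.

Definition c_dec := mk (
  let I := F1 X in let F := F1 (S1 X) in let D := S1 (S1 X) in
  let Lx := Ap c_add (Pr (emul (Kc 2) (emul D D)) (Kc 1)) in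
  let init := Pr D (Pr F (Pr (Ap (c_R0 e) I) (Kc 1))) in
  let st := Ap (c_iter c_mainit) (Pr init Lx) in
  emul (S1 (S1 (S1 st))) (Ap c_check (Pr (F1 (S1 st)) (F1 (S1 (S1 st)))))).

Lemma dec_eq I F D :
  cf c_dec (cpair (code_list I) (cpair (code_list F) (code_list D))) =
  Nat.b2n (okb F D I (S (2 * (code_list D * code_list D) + 1))).
Proof.
  unfold c_dec, emul. simp. rewrite !c_mul_eq, c_add_eq, R0_eq, c_iter_eq, iter_main. simp.
  unfold c_dec, emul. simp. rewrite ?c_mul_eq, ?c_add_eq, ?R0_eq, ?c_iter_eq, ?iter_main; simp.
  rewrite ?check_eq, ?c_mul_eq.
  remember (code_list D * code_list D + (code_list D * code_list D + 0) + 1) as L.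
  replace (2 * (code_list D * code_list D) + 1) with L by (simpl in *; lia).
  unfold okb at 2. rewrite seq_S, forallb_app. simpl. fold (okb F D I L).
  destruct (okb F D I L), (forallb (goodb F) _); reflexivity.
Qed.

End Main.

Section Safe.
Variable M : nat -> Prop.
Variable op : nat -> nat -> nat.
Variable mp opp : prog.
Definition chiM n := if excluded_middle_informative (M n) then 1 else 0.
Hypothesis Hmp : computes mp chiM.
Hypothesis Hop : forall a b, M a -> M b -> eval opp (cpair a b) (op a b).

Definition safeop n := if excluded_middle_informative (M (fst' n) /\ M (snd' n)) then op (fst' n) (snd' n) else 0.

Definition cM : cfun := {| cp := mp; cf := chiM; cok := Hmp |}.
Definition sprog := PComp (PRec PZero (PComp opp PFst)) (cmp (Pr X (emul (Ap cM (F1 X)) (Ap cM (S1 X))))).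

Lemma safe_ok : computes sprog safeop.
Proof.
  intro n. unfold sprog. econstructor. apply cmp_ok. simpl. rewrite c_mul_eq.
  unfold safeop, chiM.
  destruct (excluded_middle_informative (M (fst' n))) as [H1|H1];
  destruct (excluded_middle_informative (M (snd' n))) as [H2|H2];
  destruct (excluded_middle_informative (M (fst' n) /\ M (snd' n))) as [H3|H3]; try tauto; simpl;
    try (constructor; constructor).
  econstructor. constructor. constructor.
  econstructor. constructor. pose proof (Hop _ _ H1 H2) as E. rewrite cpair_eta in E. exact E.
Qed.

Definition csafe : cfun := {| cp := sprog; cf := safeop; cok := safe_ok |}.
Lemma csafe_eq a b : M a -> M b -> cf csafe (cpair a b) = op a b.
Proof.
  intros. simpl. unfold safeop. rewrite fst'_cpair, snd'_cpair.
  destruct excluded_middle_informative; tauto.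
Qed.
End Safe.

Section Paths.
Variable M : nat -> Prop.
Variable op : nat -> nat -> nat.
Variable e : nat.
Variable T : transducer.
Hypothesis HeM : M e.
Hypothesis Hcl : forall a b, M a -> M b -> M (op a b).
Hypothesis Has : forall a b c, M a -> M b -> M c -> op (op a b) c = op a (op b c).
Hypothesis Hid : forall a, M a -> op e a = a /\ op a e = a.
Hypothesis Hwf : wf_transducer M T.

Notation path := (path op e T).
Notation delta := (t_delta T).

Lemma path_M p u m q : path p u m q -> M m.
Proof. induction 1; auto. apply Hcl; auto. eapply Hwf; eauto. Qed.

Lemma path_snoc p u m r a x q : path p u m r -> In (r, a, x, q) delta -> path p (u ++ [a]) (op m x) q.
Proof.
  intros H Hin. induction H.
  - simpl. assert (Mx : M x) by (eapply Hwf; eauto).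
    replace (op e x) with (op x e) by (destruct (Hid x Mx); congruence).
    econstructor; [exact Hin|constructor].
  - simpl. assert (Mx : M x) by (eapply Hwf; eauto).
    rewrite Has; [| eapply Hwf; eauto | eapply path_M; eauto | auto].
    econstructor; eauto.
Qed.

Lemma path_app p u m r w c f : path p u m r -> path r w c f -> path p (u ++ w) (op m c) f.
Proof.
  intros H1 H2. induction H1.
  - simpl. destruct (Hid _ (path_M _ _ _ _ H2)) as [-> _]. exact H2.
  - simpl. rewrite Has; [| eapply Hwf; eauto | eapply path_M; eauto | eapply path_M; eauto].
    econstructor; eauto.
Qed.

Lemma path_nil_inv p m q : path p [] m q -> m = e /\ p = q.
Proof. intro H. inversion H; auto. Qed.

Lemma path_snoc_inv u : forall p a m q, path p (u ++ [a]) m q ->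
  exists r m' x, path p u m' r /\ In (r, a, x, q) delta /\ m = op m' x.
Proof.
  induction u as [|b u IH]; intros p a m q H; simpl in H.
  - inversion H; subst. apply path_nil_inv in H6 as [-> ->].
    assert (Mx : M m1) by (eapply Hwf; eauto).
    exists p, e, m1. split; [constructor|]. split; auto.
    destruct (Hid _ Mx). congruence.
  - inversion H; subst. destruct (IH _ _ _ _ H6) as (r' & m' & x & P1 & P2 & ->).
    exists r', (op m1 m'), x. split; [econstructor; eauto|]. split; auto.
    symmetry. apply Has; [eapply Hwf; eauto | eapply path_M; eauto | eapply Hwf; eauto].
Qed.

Definition pstep (s s' : nat * nat) : Prop :=
  exists a x1 x2, In (fst s, a, x1, fst s') delta /\ In (snd s, a, x2, snd s') delta.

Inductive preach : nat * nat -> list (nat * nat) -> nat * nat -> Prop :=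
| pr_nil s : preach s [] s
| pr_cons s s1 l s' : pstep s s1 -> preach s1 l s' -> preach s (s1 :: l) s'.

Lemma pp_to_preach p u m1 p' : path p u m1 p' -> forall q m2 q', path q u m2 q' ->
  exists l, length l = length u /\ preach (p, q) l (p', q').
Proof.
  induction 1; intros q0 m0 q' H2.
  - apply path_nil_inv in H2 as [_ ->]. exists []. split; auto. constructor.
  - inversion H2; subst. destruct (IHpath _ _ _ H8) as (l & Hl & Hr).
    exists ((r, r0) :: l). split; [simpl; auto|]. econstructor; [|exact Hr].
    exists a, m1, m3. simpl. auto.
Qed.

Lemma preach_to_pp s l s' : preach s l s' ->
  exists u m1 m2, length u = length l /\ path (fst s) u m1 (fst s') /\ path (snd s) u m2 (snd s').
Proof.
  induction 1.
  - exists [], e, e. repeat split; constructor.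
  - destruct IHpreach as (u & m1 & m2 & Hl & P1 & P2). destruct H as (a & x1 & x2 & T1 & T2).
    exists (a :: u), (op x1 m1), (op x2 m2). repeat split; [simpl; auto| econstructor; eauto | econstructor; eauto].
Qed.

Definition Tg := map (fun t : nat * nat * nat * nat => let '(_, _, _, q) := t in q) delta.

Lemma preach_in s l s' : preach s l s' -> forall y, In y l -> In y (list_prod Tg Tg).
Proof.
  induction 1; intros y Hy; [destruct Hy|]. destruct Hy as [<-|Hy]; auto.
  destruct H as (a & x1 & x2 & T1 & T2). destruct s1 as [q1 q2]. simpl in *.
  apply in_prod; unfold Tg; apply in_map_iff; eexists; split; [|exact T1| |exact T2]; reflexivity.
Qed.

Lemma preach_app s l1 s1 l2 s' : preach s l1 s1 -> preach s1 l2 s' -> preach s (l1 ++ l2) s'.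
Proof. induction 1; intro H2; simpl; auto. econstructor; eauto. Qed.

Lemma preach_split l1 : forall s x l2 s', preach s (l1 ++ x :: l2) s' -> preach s (l1 ++ [x]) x /\ preach x l2 s'.
Proof.
  induction l1 as [|y l1 IH]; intros s x l2 s' H; simpl in *; inversion H; subst.
  - split; auto. econstructor; eauto. constructor.
  - destruct (IH _ _ _ _ H5). split; auto. econstructor; eauto.
Qed.

Lemma preach_short n : forall s l s', length l <= n -> preach s l s' ->
  exists l', length l' <= length delta * length delta /\ preach s l' s'.
Proof.
  induction n as [|n IH]; intros s l s' Hn H.
  - exists l. split; auto. destruct l; simpl in *; lia.
  - destruct (le_lt_dec (length l) (length delta * length delta)) as [Hle|Hgt]; [exists l; auto|].
    assert (ND : ~ NoDup l).
    { intro ND. pose proof (NoDup_incl_length ND (preach_in _ _ _ H)) as Hc.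
      rewrite length_prod in Hc. unfold Tg in Hc. rewrite length_map in Hc. lia. }
    apply ListDec.not_NoDup in ND; [|intros x y; apply classic].
    destruct ND as (x & l1 & l2 & l3 & ->).
    apply preach_split in H as [H1 H2].
    replace (l2 ++ x :: l3) with ([] ++ l2 ++ x :: l3) in H2 by reflexivity.
    rewrite app_assoc in H2. apply preach_split in H2 as [_ H3].
    apply (IH s (l1 ++ [x] ++ l3) s').
    + clear -Hn. rewrite !length_app in *. simpl in *. rewrite !length_app in *. simpl in *. lia.
    + rewrite app_assoc. eapply preach_app; eauto.
Qed.

Lemma pp_short p u m1 p' q m2 q' : path p u m1 p' -> path q u m2 q' ->
  exists u' n1 n2, length u' <= length delta * length delta /\ path p u' n1 p' /\ path q u' n2 q'.
Proof.
  intros H1 H2. destruct (pp_to_preach _ _ _ _ H1 _ _ _ H2) as (l & _ & Hr).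
  destruct (preach_short (length l) _ _ _ (le_n _) Hr) as (l' & Hl' & Hr').
  destruct (preach_to_pp _ _ _ Hr') as (u' & n1 & n2 & Hu & P1 & P2).
  exists u', n1, n2. rewrite Hu. auto.
Qed.

End Paths.

Section Core.
Variable M : nat -> Prop.
Variable op : nat -> nat -> nat.
Variable e : nat.
Variable T : transducer.
Hypothesis HeM : M e.
Hypothesis Hcl : forall a b, M a -> M b -> M (op a b).
Hypothesis Has : forall a b c, M a -> M b -> M c -> op (op a b) c = op a (op b c).
Hypothesis Hid : forall a, M a -> op e a = a /\ op a e = a.
Hypothesis Hrc : right_cancellative M op.
Hypothesis Hmge : forall m1 m2, M m1 -> M m2 -> equalizable M op m1 m2 -> exists x1 x2, mge M op m1 m2 x1 x2.
Hypothesis Hwf : wf_transducer M T.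

Notation path := (path op e T).
Notation delta := (t_delta T).

Lemma eq_common m1 m2 n1 n2 c d : M m1 -> M m2 -> M n1 -> M n2 -> M c -> M d ->
  op m1 c = op m2 d -> op n1 c = op n2 d ->
  forall y1 y2, M y1 -> M y2 -> op n1 y1 = op n2 y2 -> op m1 y1 = op m2 y2.
Proof.
  intros Mm1 Mm2 Mn1 Mn2 Mc Md E1 E2 y1 y2 My1 My2 E3.
  destruct (Hmge n1 n2 Mn1 Mn2) as (z1 & z2 & [Hz1 [Hz2 Ez]] & Hf).
  { exists c, d. split; auto. }
  destruct (Hf c d) as (t & Mt & -> & ->). { split; auto. }
  assert (Ez' : op m1 z1 = op m2 z2).
  { apply (Hrc _ _ t); auto. rewrite !Has; auto. }
  destruct (Hf y1 y2) as (s & Ms & -> & ->). { split; auto. }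
  rewrite <- !Has; auto; congruence.
Qed.

Definition bounded (L : nat) := forall u m m', length u <= L ->
  in_language op e T u m -> in_language op e T u m' -> m = m'.

Definition coacc p q := exists w f f' c d, In f (t_final T) /\ In f' (t_final T) /\ path p w c f /\ path q w d f'.

Let pM := path_M M op e T HeM Hcl Hwf.
Let pA := path_app M op e T HeM Hcl Has Hid Hwf.
Let K := length delta * length delta.

Lemma phi (Hb : bounded (2 * K + 1)) v : forall i i' p q m1 m2,
  In i (t_init T) -> In i' (t_init T) -> path i v m1 p -> path i' v m2 q -> coacc p q ->
  exists j j' v' n1 n2, length v' <= K /\ In j (t_init T) /\ In j' (t_init T) /\
    path j v' n1 p /\ path j' v' n2 q /\
    (forall y1 y2, M y1 -> M y2 -> (op m1 y1 = op m2 y2 <-> op n1 y1 = op n2 y2)).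
Proof.
  induction v as [|a v0 IH] using rev_ind; intros i i' p q m1 m2 Hi Hi' H1 H2 Hc.
  - exists i, i', [], m1, m2. simpl. repeat split; auto; try lia; tauto.
  - destruct (path_snoc_inv M op e T HeM Hcl Has Hid Hwf _ _ _ _ _ H1) as (r1 & m1' & x1 & P1 & T1 & ->).
    destruct (path_snoc_inv M op e T HeM Hcl Has Hid Hwf _ _ _ _ _ H2) as (r2 & m2' & x2 & P2 & T2 & ->).
    assert (Mx1 : M x1) by (eapply Hwf; eauto).
    assert (Mx2 : M x2) by (eapply Hwf; eauto).
    assert (Mm1 : M m1') by (eapply pM; eauto).
    assert (Mm2 : M m2') by (eapply pM; eauto).
    destruct Hc as (w & f & f' & c & d & Hf & Hf' & Pw1 & Pw2).
    destruct (IH i i' r1 r2 m1' m2' Hi Hi' P1 P2) as (j & j' & v0' & n1 & n2 & Hl & Hj & Hj' & Q1 & Q2 & HE).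
    { exists (a :: w), f, f', (op x1 c), (op x2 d). repeat split; auto; econstructor; eauto. }
    assert (Mn1 : M n1) by (eapply pM; eauto).
    assert (Mn2 : M n2) by (eapply pM; eauto).
    pose proof (path_snoc M op e T HeM Hcl Has Hid Hwf _ _ _ _ _ _ _ Q1 T1) as Q1'.
    pose proof (path_snoc M op e T HeM Hcl Has Hid Hwf _ _ _ _ _ _ _ Q2 T2) as Q2'.
    destruct (pp_short _ _ _ _ _ _ _ _ _ _ Q1' Q2') as (u'' & k1 & k2 & Hu & K1 & K2).
    destruct (pp_short _ _ _ _ _ _ _ _ _ _ Pw1 Pw2) as (w' & c' & d' & Hw & W1 & W2).
    assert (Mk1 : M k1) by (eapply pM; eauto).
    assert (Mk2 : M k2) by (eapply pM; eauto).
    assert (Mc : M c') by (eapply pM; eauto).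
    assert (Md : M d') by (eapply pM; eauto).
    assert (E1 : op k1 c' = op k2 d').
    { apply (Hb (u'' ++ w')).
      - rewrite length_app. fold K in Hu, Hw. lia.
      - exists j, f. repeat split; auto. eapply pA; eauto.
      - exists j', f'. repeat split; auto. eapply pA; eauto. }
    assert (E2 : op (op n1 x1) c' = op (op n2 x2) d').
    { apply (Hb ((v0' ++ [a]) ++ w')).
      - rewrite !length_app. simpl. fold K in Hu, Hw. lia.
      - exists j, f. repeat split; auto. eapply pA; eauto.
      - exists j', f'. repeat split; auto. eapply pA; eauto. }
    exists j, j', u'', k1, k2. repeat split; auto.
    + intro E. rewrite !Has in E by auto.
      apply HE in E; try apply Hcl; auto. rewrite <- !Has in E by auto.
      revert E. apply (eq_common k1 k2 (op n1 x1) (op n2 x2) c' d'); auto.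
    + intro E. rewrite !Has by auto.
      apply HE; try apply Hcl; auto. rewrite <- !Has by auto.
      revert E. apply (eq_common (op n1 x1) (op n2 x2) k1 k2 c' d'); auto.
Qed.

Theorem bounded_functional : bounded (2 * K + 1) -> functional op e T.
Proof.
  intros Hb u m m' (i & f & Hi & Hf & P1) (i' & f' & Hi' & Hf' & P2).
  destruct (phi Hb u i i' f f' m m' Hi Hi' P1 P2) as (j & j' & v' & n1 & n2 & Hl & Hj & Hj' & Q1 & Q2 & HE).
  { exists [], f, f', e, e. repeat split; auto; constructor. }
  assert (En : n1 = n2).
  { apply (Hb v'). lia. exists j, f; auto. exists j', f'; auto. }
  assert (Mm : M m) by (eapply pM; eauto).
  assert (Mm' : M m') by (eapply pM; eauto).
  specialize (HE e e HeM HeM). subst n2.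
  assert (op m e = op m' e) by (apply HE; reflexivity).
  destruct (Hid m Mm), (Hid m' Mm'). congruence.
Qed.

End Core.

Lemma fold_In {B} (f : list nat -> B -> list nat) (Pr : B -> nat -> Prop) l :
  (forall a y x, In x (f a y) <-> In x a \/ Pr y x) ->
  forall acc x, In x (fold_left f l acc) <-> In x acc \/ exists y, In y l /\ Pr y x.
Proof.
  intro H. induction l as [|y l IH]; intros acc x; simpl.
  - split; [auto|intros [H1|(y & [] & _)]; auto].
  - rewrite IH, H. split.
    + intros [[H1|H1]|(z & Hz & H2)]; eauto.
    + intros [H1|(z & [<-|Hz] & H2)]; eauto.
Qed.

Section Conn.
Variable cop : cfun.
Variable e : nat.

Lemma innerL_In c t1 D acc x : In x (innerL cop c t1 D acc) <->
  In x acc \/ exists t2, In t2 D /\ condb c t1 t2 = true /\ x = newc cop c t1 t2.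
Proof.
  unfold innerL. rewrite (fold_In _ (fun t2 x => condb c t1 t2 = true /\ x = newc cop c t1 t2)). reflexivity.
  intros a y z. destruct (condb c t1 y); simpl; split; intuition congruence.
Qed.

Lemma succL_In D c acc x : In x (succL cop D c acc) <->
  In x acc \/ exists t1 t2, In t1 D /\ In t2 D /\ condb c t1 t2 = true /\ x = newc cop c t1 t2.
Proof.
  unfold succL. rewrite (fold_In _ (fun t1 x => exists t2, In t2 D /\ condb c t1 t2 = true /\ x = newc cop c t1 t2)).
  - split; intros [H|H]; auto; right.
    + destruct H as (t1 & H1 & t2 & H2 & H3 & H4). eauto 7.
    + destruct H as (t1 & t2 & H1 & H2 & H3 & H4). eauto 7.
  - intros. apply innerL_In.
Qed.

Lemma stepL_In D R x : In x (stepL cop D R) <->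
  exists c t1 t2, In c R /\ In t1 D /\ In t2 D /\ condb c t1 t2 = true /\ x = newc cop c t1 t2.
Proof.
  unfold stepL. rewrite (fold_In _ (fun c x => exists t1 t2, In t1 D /\ In t2 D /\ condb c t1 t2 = true /\ x = newc cop c t1 t2)).
  - simpl. split; [intros [[]|(c & H1 & t1 & t2 & H)]; eauto 8|].
    intros (c & t1 & t2 & H1 & H). right. eauto 8.
  - intros. apply succL_In.
Qed.

Lemma R0L_In I x : In x (R0L e I) <-> exists i i', In i I /\ In i' I /\ x = cfg i e i' e.
Proof.
  unfold R0L. rewrite (fold_In _ (fun i x => exists i', In i' I /\ x = cfg i e i' e)).
  - simpl. split; [intros [[]|(i & H1 & i' & H)]; eauto 8|].
    intros (i & i' & H1 & H). right. eauto 8.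
  - intros a y z. rewrite (fold_In _ (fun i' x => x = cfg y e i' e)).
    + reflexivity.
    + intros. simpl. intuition.
Qed.
End Conn.

Lemma dec_cfg p m1 q m2 : P_ (cfg p m1 q m2) = p /\ M1_ (cfg p m1 q m2) = m1 /\ Q_ (cfg p m1 q m2) = q /\ M2_ (cfg p m1 q m2) = m2.
Proof. unfold P_, M1_, Q_, M2_, cfg. rewrite ?snd'_cpair, ?fst'_cpair, ?snd'_cpair, ?fst'_cpair. auto. Qed.

Lemma dec_tr p a m q : src (code_trans (p, a, m, q)) = p /\ lbl (code_trans (p, a, m, q)) = a /\
  out (code_trans (p, a, m, q)) = m /\ tgt (code_trans (p, a, m, q)) = q.
Proof. unfold src, lbl, out, tgt, code_trans. rewrite ?snd'_cpair, ?fst'_cpair, ?snd'_cpair, ?fst'_cpair. auto. Qed.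

Lemma cfg_inj p m1 q m2 p' m1' q' m2' : cfg p m1 q m2 = cfg p' m1' q' m2' -> p = p' /\ m1 = m1' /\ q = q' /\ m2 = m2'.
Proof.
  intro H. pose proof (dec_cfg p m1 q m2). pose proof (dec_cfg p' m1' q' m2'). rewrite H in *. intuition congruence.
Qed.

Section Conn2.
Variable M : nat -> Prop.
Variable op : nat -> nat -> nat.
Variable e : nat.
Variable T : transducer.
Variable cop : cfun.
Hypothesis HeM : M e.
Hypothesis Hcl : forall a b, M a -> M b -> M (op a b).
Hypothesis Has : forall a b c, M a -> M b -> M c -> op (op a b) c = op a (op b c).
Hypothesis Hid : forall a, M a -> op e a = a /\ op a e = a.
Hypothesis Hwf : wf_transducer M T.
Hypothesis Hcop : forall a b, M a -> M b -> cf cop (cpair a b) = op a b.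

Notation path := (path op e T).
Notation delta := (t_delta T).
Let D := map code_trans delta.
Let I := t_init T.
Let pM := path_M M op e T HeM Hcl Hwf.

Lemma Rk_In k : forall c, In c (Rk cop e D I k) <->
  exists u i i' p q m1 m2, length u = k /\ In i I /\ In i' I /\ path i u m1 p /\ path i' u m2 q /\ c = cfg p m1 q m2.
Proof.
  induction k; intro c.
  - unfold Rk. simpl. rewrite R0L_In. split.
    + intros (i & i' & H1 & H2 & ->). exists [], i, i', i, i', e, e. repeat split; auto; constructor.
    + intros ([|] & i & i' & p & q & m1 & m2 & Hl & H1 & H2 & P1 & P2 & ->); [|simpl in Hl; lia].
      apply path_nil_inv in P1 as [-> ->]. apply path_nil_inv in P2 as [-> ->]. eauto.
  - unfold Rk. simpl Nat.iter. fold (Rk cop e D I k). rewrite stepL_In. split.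
    + intros (c0 & t1 & t2 & H0 & Ht1 & Ht2 & Hc & ->).
      apply IHk in H0 as (u & i & i' & p & q & m1 & m2 & Hl & Hi & Hi' & P1 & P2 & ->).
      unfold D in Ht1, Ht2. apply in_map_iff in Ht1 as ([[[p1 a1] x1] q1] & <- & T1).
      apply in_map_iff in Ht2 as ([[[p2 a2] x2] q2] & <- & T2).
      unfold condb in Hc. destruct (dec_cfg p m1 q m2) as (E1 & E2 & E3 & E4).
      destruct (dec_tr p1 a1 x1 q1) as (F1 & F2 & F3 & F4). destruct (dec_tr p2 a2 x2 q2) as (G1 & G2 & G3 & G4).
      rewrite E1, E3, F1, F2, G1, G2 in Hc. apply andb_prop in Hc as [Hc H3]. apply andb_prop in Hc as [H1 H2].
      apply Nat.eqb_eq in H1, H2, H3. subst p1 p2 a2.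
      exists (u ++ [a1]), i, i', q1, q2, (op m1 x1), (op m2 x2). repeat split; auto.
      * rewrite length_app. simpl. lia.
      * eapply path_snoc; eauto.
      * eapply path_snoc; eauto.
      * assert (M m1) by (eapply pM; eauto). assert (M m2) by (eapply pM; eauto).
        assert (M x1) by (eapply Hwf; eauto). assert (M x2) by (eapply Hwf; eauto).
        unfold newc. rewrite E2, E4, F3, F4, G3, G4, !Hcop; auto.
    + intros (u' & i & i' & p & q & m1 & m2 & Hl & Hi & Hi' & P1 & P2 & ->).
      destruct u' as [|a u] using rev_ind; [simpl in Hl; lia|]. clear IHu.
      rewrite length_app in Hl. simpl in Hl.
      destruct (path_snoc_inv M op e T HeM Hcl Has Hid Hwf _ _ _ _ _ P1) as (r1 & m1' & x1 & Q1 & T1 & ->).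
      destruct (path_snoc_inv M op e T HeM Hcl Has Hid Hwf _ _ _ _ _ P2) as (r2 & m2' & x2 & Q2 & T2 & ->).
      exists (cfg r1 m1' r2 m2'), (code_trans (r1, a, x1, p)), (code_trans (r2, a, x2, q)).
      destruct (dec_cfg r1 m1' r2 m2') as (E1 & E2 & E3 & E4).
      destruct (dec_tr r1 a x1 p) as (F1 & F2 & F3 & F4). destruct (dec_tr r2 a x2 q) as (G1 & G2 & G3 & G4).
      repeat split.
      * apply IHk. exists u, i, i', r1, r2, m1', m2'. repeat split; auto. lia.
      * unfold D. apply in_map. auto.
      * unfold D. apply in_map. auto.
      * unfold condb. rewrite E1, E3, F1, F2, G1, G2, !Nat.eqb_refl. reflexivity.
      * assert (M m1') by (eapply pM; eauto). assert (M m2') by (eapply pM; eauto).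
        assert (M x1) by (eapply Hwf; eauto). assert (M x2) by (eapply Hwf; eauto).
        unfold newc. rewrite E2, E4, F3, F4, G3, G4, !Hcop; auto.
Qed.

Lemma existsb_In x l : existsb (Nat.eqb x) l = true <-> In x l.
Proof.
  rewrite existsb_exists. split.
  - intros (y & H1 & H2). apply Nat.eqb_eq in H2. subst. auto.
  - intro H. exists x. rewrite Nat.eqb_refl. auto.
Qed.

Lemma goodb_cfg F p m1 q m2 : goodb F (cfg p m1 q m2) = true <-> (In p F /\ In q F -> m1 = m2).
Proof.
  unfold goodb. destruct (dec_cfg p m1 q m2) as (E1 & E2 & E3 & E4). rewrite E1, E2, E3, E4.
  rewrite Bool.orb_true_iff, Bool.negb_true_iff, Nat.eqb_eq.
  destruct (existsb (Nat.eqb p) F) eqn:Ep, (existsb (Nat.eqb q) F) eqn:Eq; simpl;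
  rewrite <- !existsb_In; rewrite ?Ep, ?Eq; intuition congruence.
Qed.

Lemma okb_iff L : okb cop e (t_final T) D I (S L) = true <-> bounded op e T L.
Proof.
  unfold okb, bounded. rewrite forallb_forall. split.
  - intros H u m m' Hl (i & f & Hi & Hf & P1) (i' & f' & Hi' & Hf' & P2).
    specialize (H (length u)). rewrite forallb_forall in H.
    assert (Hc : In (cfg f m f' m') (Rk cop e D I (length u))).
    { apply Rk_In. exists u, i, i', f, f', m, m'. repeat split; auto. }
    specialize (H ltac:(apply in_seq; lia) _ Hc). rewrite goodb_cfg in H. apply H; auto.
  - intros H j Hj. apply in_seq in Hj. apply forallb_forall. intros c Hc.
    apply Rk_In in Hc as (u & i & i' & p & q & m1 & m2 & Hl & Hi & Hi' & P1 & P2 & ->).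
    apply goodb_cfg. intros [Hp Hq]. apply (H u); [lia| exists i, p | exists i', q]; auto.
Qed.

End Conn2.

Theorem proposition5 (M : nat -> Prop) (op : nat -> nat -> nat) (e : nat) :
  effective_mge_monoid M op e ->
  exists d : prog, forall T : transducer, wf_transducer M T ->
    (functional op e T -> eval d (code_transducer T) 1) /\
    (~ functional op e T -> eval d (code_transducer T) 0).
Proof.
  intros [[[HeM [Hcl [Has Hid]]] [Hrc Hmge]] [[mp Hmp] [[opp Hop] _]]].
  assert (Hmp' : computes mp (chiM M)).
  { intro n. unfold chiM. destruct excluded_middle_informative; apply Hmp; auto. }
  set (cs := csafe M op mp opp Hmp' Hop).
  exists (cp (c_dec cs e)).
  intros T Hwf.
  pose proof (cok (c_dec cs e) (code_transducer T)) as Hev.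
  unfold code_transducer in Hev. rewrite dec_eq in Hev.
  set (D := map code_trans (t_delta T)) in Hev.
  set (L := 2 * (code_list D * code_list D) + 1) in Hev.
  assert (Hiff : okb cs e (t_final T) D (t_init T) (S L) = true <-> functional op e T).
  { pose proof (okb_iff M op e T cs HeM Hcl Has Hid Hwf (csafe_eq M op mp opp Hmp' Hop) L) as HH.
    change (map code_trans (t_delta T)) with D in HH. rewrite HH.
    split.
    - intro Hb. apply (bounded_functional M op e T HeM Hcl Has Hid Hrc Hmge Hwf).
      intros u m m' Hl. apply Hb.
      assert (length (t_delta T) <= code_list D).
      { pose proof (code_list_len D). unfold D in *. rewrite length_map in *. lia. }
      unfold L. pose proof (Nat.mul_le_mono _ _ _ _ H H). lia.
    - intros Hf u m m' _. apply Hf. }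
  split.
  - intro Hf. apply Hiff in Hf. rewrite Hf in Hev. exact Hev.
  - intro Hn. destruct (okb cs e (t_final T) D (t_init T) (S L)) eqn:E.
    + exfalso. apply Hn, Hiff. reflexivity.
    + exact Hev.
Qed.
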